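(* Let $F:\mathbb{R}\to\mathbb{R}$ be a real function whose graph, as a subspace of $\mathbb{R}^2$, is connected and completely metrizable. Let $S$ be the set of all $x\in\mathbb{R}$ at which $F$ is not continuous. Then $S$ is a meager subset of $\mathbb{R}$.
   Context: A real function is identified with its graph $\{(x,F(x)):x\in\mathbb{R}\}\subset\mathbb{R}^2$ with the subspace topology of the Euclidean plane. *)

(* Defs.v *)
From HB Require Import structures.
From mathcomp Require Import all_boot all_order all_algebra.
From mathcomp Require Import all_classical all_reals all_analysis.
Set Implicit Arguments. Unset Strict Implicit. Unset Printing Implicit Defensive.
Import Order.TTheory GRing.Theory Num.Theory.
Import numFieldNormedType.Exports.
Local Open Scope classical_set_scope.
Local Open Scope ring_scope.

Definition graph {R : realType} (F : R -> R) : set (R * R) :=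
  [set p | p.2 = F p.1].

Definition completely_metrizable {R : realType} {T : topologicalType}
  (A : set T) : Prop :=
  exists d : T -> T -> R,
    (forall x y, A x -> A y -> 0 <= d x y) /\
        (forall x y, A x -> A y -> (d x y = 0 <-> x = y)) /\
        (forall x y, A x -> A y -> d x y = d y x) /\
        (forall x y z, A x -> A y -> A z -> d x z <= d x y + d y z) /\
        (* the metric topology on A coincides with the subspace topology *)
        (forall V : set T,
           ((exists2 U : set T, open U & V = A `&` U) <->
           (V `<=` A /\ forall x, V x ->
              exists2 e : R, 0 < e & forall y, A y -> d x y < e -> V y))) /\
        (forall u : nat -> T, (forall n, A (u n)) ->
           (forall e : R, 0 < e -> exists N : nat, forall m n : nat,
              (N <= m)%N -> (N <= n)%N -> d (u m) (u n) < e) ->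
           (exists2 l, A l & forall e : R, 0 < e -> exists N : nat,
              forall n : nat, (N <= n)%N -> d (u n) l < e)).

Definition nowhere_dense {T : topologicalType} (A : set T) : Prop :=
  interior (closure A) = set0.

Definition meager {T : topologicalType} (S : set T) : Prop :=
  exists N : nat -> set T, (forall n, nowhere_dense (N n)) /\
    S `<=` \bigcup_n N n.

(* Main.v *)
Require Import Defs.
From HB Require Import structures.
From mathcomp Require Import all_boot all_order all_algebra.
From mathcomp Require Import all_classical all_reals all_analysis.
From mathcomp Require Import ring lra zify.
Import Order.TTheory GRing.Theory Num.Theory.
Import numFieldNormedType.Exports.
Local Open Scope classical_set_scope.
Local Open Scope ring_scope.

Lemma ballR {R : realType} (x y e : R) : ball x e y <-> `|x - y| < e.
Proof. by rewrite -ball_normE. Qed.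

Lemma ballRR {R : realType} (p q : (R * R)%type) e :
  ball p e q <-> `|p.1 - q.1| < e /\ `|p.2 - q.2| < e.
Proof. by rewrite /ball /= /prod_ball -!ball_normE. Qed.

Lemma open_ballRR {R : realType} (p : (R * R)%type) e : open (ball p e).
Proof. exact: ball_open. Qed.

Lemma nbhs_ballRR {R : realType} {p : (R * R)%type} {U : set (R * R)} :
  open U -> U p -> exists2 e : R, 0 < e & forall q, `|p.1 - q.1| < e -> `|p.2 - q.2| < e -> U q.
Proof.
move=> oU Up.
have : nbhs p U by apply: open_nbhs_nbhs; split.
move=> /nbhs_ballP[e e0 he]; exists e => // q h1 h2; apply: he; exact/ballRR.
Qed.

Lemma closureR {R : realType} {A : set R} {x : R} : closure A x ->
  forall e, 0 < e -> exists y, A y /\ `|x - y| < e.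
Proof.
move=> cA e e0.
have : nbhs x (ball x e) by apply: nbhsx_ballx.
move=> /cA [y [Ay By]]; exists y; split => //; exact/ballR.
Qed.

Lemma interiorR {R : realType} {A : set R} {x : R} : interior A x ->
  exists2 e, 0 < e & forall y, `|x - y| < e -> A y.
Proof.
move=> /nbhs_ballP[e e0 he]; exists e => // y h; apply: he; exact/ballR.
Qed.


Lemma absltP {R : realType} (x e : R) : `|x| < e <-> (- e < x /\ x < e).
Proof. by rewrite ltr_norml; split => [/andP[]|[-> ->]]. Qed.

Lemma absleP {R : realType} (x e : R) : `|x| <= e <-> (- e <= x /\ x <= e).
Proof. by rewrite ler_norml; split => [/andP[]|[-> ->]]. Qed.

Lemma posmin2 {R : realType} {a b : R} : 0 < a -> 0 < b ->
  exists s, [/\ 0 < s, s <= a & s <= b].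
Proof.
move=> a0 b0; exists (Num.min a b); split.
- by rewrite lt_min a0 b0.
- by rewrite ge_min lexx.
- by rewrite ge_min lexx orbT.
Qed.

Lemma archi {R : realType} {e : R} : 0 < e -> exists N : nat, N.+1%:R^-1 < e.
Proof.
move=> e0; exists (Num.truncn e^-1).
by rewrite -ltf_pV2 ?(posrE,invr_gt0)// invrK truncnS_gt.
Qed.

Lemma inv_mono {R : realType} (m n : nat) : (m <= n)%N -> n.+1%:R^-1 <= m.+1%:R^-1 :> R.
Proof. by move=> mn; rewrite lef_pV2 ?posrE// ler_nat ltnS. Qed.

Lemma eq_small {R : realType} (x y : R) : (forall e, 0 < e -> `|x - y| < e) -> x = y.
Proof.
move=> h; apply/eqP; apply: contrapT => /negP nxy.
have : 0 < `|x - y| by rewrite normr_gt0 subr_eq0.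
by move=> /h; rewrite ltxx.
Qed.

Definition E {R : realType} (F : R -> R) (k : nat) : set R :=
  [set x | forall dl, 0 < dl -> exists y z, [/\ `|y - x| < dl, `|z - x| < dl &
     k.+1%:R^-1 <= `|F y - F z|]].

Lemma E_closed {R : realType} (F : R -> R) k : closed (E F k).
Proof.
move=> x cx dl dl0.
have [y [Ey hy]] := closureR cx (dl / 2) ltac:(lra).
have [y1 [z1 [h1 h2 h3]]] := Ey (dl / 2) ltac:(lra).
exists y1, z1; split => //.
- move: hy h1 => /absltP[? ?] /absltP[? ?]; apply/absltP; split; lra.
- move: hy h2 => /absltP[? ?] /absltP[? ?]; apply/absltP; split; lra.
Qed.

Lemma notcont_E {R : realType} (F : R -> R) x :
  ~ {for x, continuous F} -> exists k, E F k x.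
Proof.
move=> nc; apply: contrapT => nE; apply: nc.
apply/cvgrPdist_lt => e e0.
have [k hk] := archi e0.
have : exists2 dl, 0 < dl & forall y z, `|y - x| < dl -> `|z - x| < dl ->
    `|F y - F z| < k.+1%:R^-1.
  apply: contrapT => H; apply: nE; exists k => dl dl0.
  apply: contrapT => H2; apply: H; exists dl => // y z hy hz.
  rewrite ltNge; apply/negP => h; apply: H2; exists y, z; split => //.
move=> [dl dl0 hdl].
apply/nbhs_ballP; exists dl => // t /ballR ht.
rewrite /=; apply: lt_trans (hk).
rewrite distrC; apply: hdl; last by rewrite subrr normr0.
by rewrite distrC.
Qed.


Lemma openRR_of {R : realType} (W : set (R * R)) :
  (forall p, W p -> exists2 e : R, 0 < e &
     forall q, `|p.1 - q.1| < e -> `|p.2 - q.2| < e -> W q) -> open W.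
Proof.
move=> h; rewrite openE => p Wp; have [e e0 he] := h p Wp.
apply/nbhs_ballP; exists e => // q /ballRR[h1 h2]; exact: he.
Qed.

Lemma openR_ball {R : realType} {P : set R} {t : R} : open P -> P t ->
  exists2 e : R, 0 < e & forall u, `|t - u| < e -> P u.
Proof. by rewrite openE => oP Pt; apply: interiorR; apply: oP. Qed.

Lemma darboux_core {R : realType} (F : R -> R) (hc : connected (graph F))
  (a b : R) (P Q : set R) : a <= b -> open P -> open Q ->
  (forall t, P t -> Q t -> False) -> P (F a) -> Q (F b) ->
  (forall s, a <= s <= b -> P (F s) \/ Q (F s)) -> False.
Proof.
move=> ab oP oQ PQ Pa Qb cov.
pose W1 : set (R * R) := [set p | p.1 < a \/ (p.1 < b /\ P p.2)].
pose W2 : set (R * R) := [set p | b < p.1 \/ (a < p.1 /\ Q p.2)].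
have oW1 : open W1.
  apply: openRR_of => -[s t]; rewrite /W1 /W2 /= => -[sa|[sb Pt]].
    exists (a - s); first lra.
    move=> [s' t'] /= /absltP[? ?] _; rewrite /W1 /W2 /=; left; lra.
  have [e e0 he] := openR_ball oP Pt.
  have [m [m0 m1 m2]] := posmin2 e0 (ltac:(lra) : 0 < b - s).
  exists m => // -[s' t'] /= /absltP[? ?] h2; rewrite /W1 /W2 /=; right; split; first lra.
  apply: he; apply: lt_le_trans h2 m1.
have oW2 : open W2.
  apply: openRR_of => -[s t]; rewrite /W1 /W2 /= => -[sa|[sb Pt]].
    exists (s - b); first lra.
    move=> [s' t'] /= /absltP[? ?] _; rewrite /W1 /W2 /=; left; lra.
  have [e e0 he] := openR_ball oQ Pt.
  have [m [m0 m1 m2]] := posmin2 e0 (ltac:(lra) : 0 < s - a).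
  exists m => // -[s' t'] /= /absltP[? ?] h2; rewrite /W1 /W2 /=; right; split; first lra.
  apply: he; apply: lt_le_trans h2 m1.
have hB := hc (graph F `&` W1).
have : graph F `&` W1 = graph F.
  apply: hB.
  - exists (a, F a); split => //; rewrite /W1 /=.
    have [ab'|ab'] := boolP (a < b); first by right.
    have eab : a = b by apply/eqP; rewrite eq_le ab /= leNgt.
    by exfalso; apply: (PQ (F a)) => //; rewrite eab.
  - by exists W1.
  - exists (~` W2); first by rewrite closedC.
    apply/seteqP; split => -[s t] [Gp Wp]; have Gp' : t = F s := Gp;
      subst t; split => //.
    + move=> W2p; move: Wp W2p; rewrite /W1 /W2 /=.
      move=> [sa|[sb Pt]] [bs|[as' Qt]]; try lra.
      exact: (PQ (F s)).
    + move: Wp; rewrite /W1 /W2 /= => nW2.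
      have [sa|as'] := ltP s a; first by left.
      have [bs|sb] := ltP b s; first by exfalso; apply: nW2; left.
      have := cov s; rewrite as' sb => /(_ isT) [Ps|Qs].
        have [sb'|bs'] := ltP s b; first by right.
        have esb : s = b by apply/eqP; rewrite eq_le sb bs'.
        by exfalso; apply: (PQ (F s)) => //; rewrite esb.
      have [as2|sa2] := ltP a s; first by exfalso; apply: nW2; right.
      have esa : s = a by apply/eqP; rewrite eq_le sa2 as'.
      by exfalso; apply: (PQ (F s)) => //; rewrite esa.
move=> /seteqP[_ /(_ (b, F b) erefl) [_]]; rewrite /W1 /= => -[ba|[bb _]]; lra.
Qed.

Lemma darboux {R : realType} (F : R -> R) (hc : connected (graph F))
  (a b c : R) : a <= b -> (F a <= c <= F b \/ F b <= c <= F a) ->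
  exists s, a <= s <= b /\ F s = c.
Proof.
move=> ab hcab; apply: contrapT => nex.
have nc : forall s, a <= s <= b -> F s <> c.
  by move=> s hs hFs; apply: nex; exists s.
have na : F a <> c by apply: nc; rewrite lexx ab.
have nb : F b <> c by apply: nc; rewrite lexx ab.
have hP : open [set t : R | t < c] by exact: open_lt.
have hQ : open [set t : R | c < t] by exact: open_gt.
case: hcab => /andP[h1 h2].
- apply: (@darboux_core _ F hc a b _ _ ab hP hQ) => /=.
  + move=> t; lra.
  + by rewrite lt_neqAle h1 andbT; apply/eqP.
  + by rewrite lt_neqAle h2 andbT; apply/eqP => h; apply: nb.
  + move=> s /nc hs; have [//|//|h] := ltgtP (F s) c; first by left.
    by right. by [].
- apply: (@darboux_core _ F hc a b _ _ ab hQ hP) => /=.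
  + move=> t; lra.
  + by rewrite lt_neqAle h2 andbT; apply/eqP => h; apply: na.
  + by rewrite lt_neqAle h1 andbT; apply/eqP.
  + move=> s /nc hs; have [h|h|h] := ltgtP (F s) c; first by right.
    by left. by [].
Qed.


Definition Cl {R : realType} (F : R -> R) (z u : R) :=
  forall e, 0 < e -> exists x, `|x - z| < e /\ `|F x - u| < e.

Lemma section_E {R : realType} (F : R -> R) (hc : connected (graph F)) k z :
  E F k z -> exists t, forall u, t <= u <= t + k.+1%:R^-1 / 2 -> Cl F z u.
Proof.
move=> Ez.
set ep : R := k.+1%:R^-1.
have ep0 : 0 < ep by rewrite /ep invr_gt0.
pose up (dl : R) := forall u, F z <= u <= F z + ep / 2 ->
  exists x, `|x - z| < dl /\ F x = u.
pose down (dl : R) := forall u, F z - ep / 2 <= u <= F z ->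
  exists x, `|x - z| < dl /\ F x = u.
have hh : forall a b c : R, a <= b -> b <= c -> a <= b <= c.
  by move=> a b c -> ->.
have claim : forall dl, 0 < dl -> up dl \/ down dl.
  move=> dl dl0; have [y [w [hy hw hyw]]] := Ez dl dl0.
  have [v [hv hFv]] : exists v, `|v - z| < dl /\ ep / 2 <= `|F v - F z|.
    have [h1|h1] := lerP (ep / 2) `|F y - F z|; first by exists y.
    have [h2|h2] := lerP (ep / 2) `|F w - F z|; first by exists w.
    exfalso; move: h1 h2; rewrite -/ep => /absltP[? ?] /absltP[? ?].
    have : `|F y - F w| < ep by apply/absltP; split; lra.
    by rewrite ltNge hyw.
  move: hFv; rewrite ler_normr => /orP[hup|hdn].
  - left => u /andP[u1 u2].
    have [zv|vz] := lerP z v.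
    + have [s [/andP[s1 s2] Fs]] := darboux F hc z v u zv (or_introl (hh (F z) u (F v) ltac:(lra) ltac:(lra))).
      exists s; split => //; move: hv => /absltP[? ?]; apply/absltP; split; lra.
    + have vz' : v <= z by apply: ltW.
      have [s [/andP[s1 s2] Fs]] := darboux F hc v z u vz' (or_intror (hh (F z) u (F v) ltac:(lra) ltac:(lra))).
      exists s; split => //; move: hv => /absltP[? ?]; apply/absltP; split; lra.
  - right => u /andP[u1 u2].
    have [zv|vz] := lerP z v.
    + have [s [/andP[s1 s2] Fs]] := darboux F hc z v u zv (or_intror (hh (F v) u (F z) ltac:(lra) ltac:(lra))).
      exists s; split => //; move: hv => /absltP[? ?]; apply/absltP; split; lra.
    + have vz' : v <= z by apply: ltW.
      have [s [/andP[s1 s2] Fs]] := darboux F hc v z u vz' (or_introl (hh (F v) u (F z) ltac:(lra) ltac:(lra))).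
      exists s; split => //; move: hv => /absltP[? ?]; apply/absltP; split; lra.
have [allup|nallup] := pselect (forall dl, 0 < dl -> up dl).
  exists (F z) => u hu e e0.
  have [x [hx hFx]] := allup e e0 u hu.
  by exists x; split => //; rewrite hFx subrr normr0.
have [dl0 [dl00 ndl0]] : exists dl, 0 < dl /\ ~ up dl.
  apply: contrapT => H; apply: nallup => dl dl0; apply: contrapT => nu.
  by apply: H; exists dl.
exists (F z - ep / 2) => u /andP[u1 u2] e e0.
have [m [m0 m1 m2]] := posmin2 e0 dl00.
have [um|dm] := claim m m0.
  exfalso; apply: ndl0 => u' hu'; have [x [hx hFx]] := um u' hu'.
  by exists x; split => //; apply: lt_le_trans hx m2.
have [x [hx hFx]] : exists x, `|x - z| < m /\ F x = u.
  by apply: dm; apply/andP; split; lra.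
by exists x; split; [apply: lt_le_trans hx m1|rewrite hFx subrr normr0].
Qed.


Ltac absify := repeat match goal with
  | H : is_true (`|_| < _) |- _ => move/absltP: H => [? ?]
  end.

Lemma T1 {R : realType} (A : set (R * R)) (d : R * R -> R * R -> R)
  (Hd0 : forall x y, A x -> A y -> (d x y = 0 <-> x = y))
  (Hsym : forall x y, A x -> A y -> d x y = d y x)
  (Htri : forall x y z, A x -> A y -> A z -> d x z <= d x y + d y z)
  (Htop : forall V : set (R * R),
           ((exists2 U : set (R * R), open U & V = A `&` U) <->
           (V `<=` A /\ forall x, V x ->
              exists2 e : R, 0 < e & forall y, A y -> d x y < e -> V y)))
  p (Ap : A p) (e : R) (e0 : 0 < e) :
  exists2 rho : R, 0 < rho & forall q q', A q -> A q' ->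
    `|p.1 - q.1| < rho -> `|p.2 - q.2| < rho ->
    `|p.1 - q'.1| < rho -> `|p.2 - q'.2| < rho -> d q q' < e.
Proof.
pose V := [set q | A q /\ d p q < e / 2].
have [U oU hVU] : exists2 U, open U & V = A `&` U.
  apply/Htop; split; first by move=> q [].
  move=> x [Ax hx]; exists (e / 2 - d p x); first lra.
  move=> y Ay hy; split => //; have := Htri p x y Ap Ax Ay; lra.
have Up : U p.
  have : V p by split => //; rewrite (proj2 (Hd0 p p Ap Ap) erefl); lra.
  by rewrite hVU => -[].
have [rho rho0 hrho] := nbhs_ballRR oU Up.
exists rho => // q q' Aq Aq' h1 h2 h3 h4.
have : V q by rewrite hVU; split => //; apply: hrho.
have : V q' by rewrite hVU; split => //; apply: hrho.
move=> [_ hq'] [_ hq]; have := Htri q p q' Aq Ap Aq'.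
rewrite (Hsym q p Aq Ap); lra.
Qed.

Lemma T2 {R : realType} (A : set (R * R)) (d : R * R -> R * R -> R)
  (Htop : forall V : set (R * R),
           ((exists2 U : set (R * R), open U & V = A `&` U) <->
           (V `<=` A /\ forall x, V x ->
              exists2 e : R, 0 < e & forall y, A y -> d x y < e -> V y)))
  l (Al : A l) (e : R) (e0 : 0 < e) :
  exists2 e' : R, 0 < e' & forall q, A q -> d l q < e' ->
    `|l.1 - q.1| < e /\ `|l.2 - q.2| < e.
Proof.
have [_ h] := proj1 (Htop (A `&` ball l e)) (ex_intro2 _ _ (ball l e) (ball_open _ _) erefl).
have [e' e'0 he'] := h l (conj Al (ballxx _ e0)).
exists e' => // q Aq hq; have [_ /ballRR] := he' q Aq hq; done.
Qed.

Lemma posmin3 {R : realType} {a b c : R} : 0 < a -> 0 < b -> 0 < c ->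
  exists s, [/\ 0 < s, s <= a, s <= b & s <= c].
Proof.
move=> a0 b0 c0; have [m [m0 m1 m2]] := posmin2 a0 b0.
have [s [s0 s1 s2]] := posmin2 m0 c0.
exists s; split => //; apply: le_trans s1 _ => //.
Qed.


Definition InvS {R : realType} (F : R -> R) (s : ((R * R) * (R * R))%type) :=
  0 < s.2.2 /\ forall z t, `|z - s.1.1| < s.2.2 ->
    (`|t - s.1.2| < s.2.2 \/ `|t - s.2.1| < s.2.2) -> Cl F z t.
Definition Sq1 {R : realType} (s : ((R * R) * (R * R))%type) z t :=
  `|z - s.1.1| < s.2.2 /\ `|t - s.1.2| < s.2.2.
Definition Sq2 {R : realType} (s : ((R * R) * (R * R))%type) z t :=
  `|z - s.1.1| < s.2.2 /\ `|t - s.2.1| < s.2.2.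
Definition Spec {R : realType} (F : R -> R) (d : R * R -> R * R -> R) (n : nat)
  (s s' : ((R * R) * (R * R))%type) :=
  [/\ 0 < s'.2.2, s'.2.2 <= n.+1%:R^-1,
     (forall z t, Sq1 s' z t -> Sq1 s z t),
     (forall z t, Sq2 s' z t -> Sq2 s z t) &
     (forall q q', graph F q -> graph F q' -> Sq1 s' q.1 q.2 -> Sq1 s' q'.1 q'.2 ->
        d q q' < n.+1%:R^-1) /\
     (forall q q', graph F q -> graph F q' -> Sq2 s' q.1 q.2 -> Sq2 s' q'.1 q'.2 ->
        d q q' < n.+1%:R^-1)].

Lemma step {R : realType} (F : R -> R) (d : R * R -> R * R -> R)
  (Hd0 : forall x y, graph F x -> graph F y -> (d x y = 0 <-> x = y))
  (Hsym : forall x y, graph F x -> graph F y -> d x y = d y x)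
  (Htri : forall x y z, graph F x -> graph F y -> graph F z -> d x z <= d x y + d y z)
  (Htop : forall V : set (R * R),
           ((exists2 U : set (R * R), open U & V = graph F `&` U) <->
           (V `<=` graph F /\ forall x, V x ->
              exists2 e : R, 0 < e & forall y, graph F y -> d x y < e -> V y)))
  n s : InvS F s -> exists s', Spec F d n s s'.
Proof.
case: s => -[c y1] [y2 r] [/= r0 hinv].
set e : R := n.+1%:R^-1.
have e0 : 0 < e by rewrite /e invr_gt0.
have z0 : forall a : R, `|a - a| < r by move=> a; rewrite subrr normr0.
have [x1 [hx1 hF1]] := hinv c y1 (z0 c) (or_introl (z0 y1)) r r0.
have G1 : graph F (x1, F x1) by [].
have [rho1 rho10 hr1] := T1 _ _ Hd0 Hsym Htri Htop _ G1 _ e0.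
move: (hx1) (hF1) => /absltP[a1 a2] /absltP[a3 a4].
have [m1 [m10 m11 m12 m13]] := posmin3 rho10 e0 (ltac:(lra) : 0 < r - (x1 - c)).
have [m2 [m20 m21 m22 m23]] := posmin3 (ltac:(lra) : 0 < r + (x1 - c))
  (ltac:(lra) : 0 < r - (F x1 - y1)) (ltac:(lra) : 0 < r + (F x1 - y1)).
have [s1 [s10 s11 s12]] := posmin2 m10 m20.
have [x2 [hx2 hF2]] := hinv x1 y2 hx1 (or_intror (z0 y2)) s1 s10.
have G2 : graph F (x2, F x2) by [].
have [rho2 rho20 hr2] := T1 _ _ Hd0 Hsym Htri Htop _ G2 _ e0.
move: (hx2) (hF2) => /absltP[b1 b2] /absltP[b3 b4].
have [k1 [k10 k11 k12 k13]] := posmin3 rho20 (ltac:(lra) : 0 < s1 - (x2 - x1))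
  (ltac:(lra) : 0 < s1 + (x2 - x1)).
have [k2 [k20 k21 k22]] := posmin2 (ltac:(lra) : 0 < s1 - (F x2 - y2))
  (ltac:(lra) : 0 < s1 + (F x2 - y2)).
have [s2 [s20 s21 s22]] := posmin2 k10 k20.
exists ((x2, F x1), (F x2, s2)); rewrite /Spec /Sq1 /Sq2 /=; split => //.
- rewrite -/e; lra.
- move=> z t [/absltP[? ?] /absltP[? ?]]; split; apply/absltP; split; lra.
- move=> z t [/absltP[? ?] /absltP[? ?]]; split; apply/absltP; split; lra.
split.
- move=> [q1 q2] [q1' q2'] Gq Gq' /= [/absltP[? ?] /absltP[? ?]]
    [/absltP[? ?] /absltP[? ?]].
  apply: hr1 => //=; apply/absltP; split; lra.
- move=> [q1 q2] [q1' q2'] Gq Gq' /= [/absltP[? ?] /absltP[? ?]]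
    [/absltP[? ?] /absltP[? ?]].
  apply: hr2 => //=; apply/absltP; split; lra.
Qed.


Lemma no_rect {R : realType} (F : R -> R) (d : R * R -> R * R -> R)
  (Hd0 : forall x y, graph F x -> graph F y -> (d x y = 0 <-> x = y))
  (Hsym : forall x y, graph F x -> graph F y -> d x y = d y x)
  (Htri : forall x y z, graph F x -> graph F y -> graph F z -> d x z <= d x y + d y z)
  (Htop : forall V : set (R * R),
           ((exists2 U : set (R * R), open U & V = graph F `&` U) <->
           (V `<=` graph F /\ forall x, V x ->
              exists2 e : R, 0 < e & forall y, graph F y -> d x y < e -> V y)))
  (Hcomp : forall u : nat -> (R * R)%type, (forall n, graph F (u n)) ->
           (forall e : R, 0 < e -> exists N : nat, forall m n : nat,
              (N <= m)%N -> (N <= n)%N -> d (u m) (u n) < e) ->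
           (exists2 l, graph F l & forall e : R, 0 < e -> exists N : nat,
              forall n : nat, (N <= n)%N -> d (u n) l < e))
  (c y1 y2 r : R) : 0 < r -> 4 * r <= y2 - y1 ->
  (forall z t, `|z - c| < r -> (`|t - y1| < r \/ `|t - y2| < r) -> Cl F z t) ->
  False.
Proof.
move=> r0 hy hrect.
pose s0 : ((R * R) * (R * R))%type := ((c, y1), (y2, r)).
have I0 : InvS F s0 by split.
have ex : forall ns : (nat * ((R * R) * (R * R)))%type,
    exists s', InvS F ns.2 -> Spec F d ns.1 ns.2 s'.
  move=> [n s]; have [Is|nIs] := pselect (InvS F s).
  - by have [s' hs'] := step F d Hd0 Hsym Htri Htop n s Is; exists s'.
  - by exists s.
have [f hf] := choice ex.
pose fix st n := if n is m.+1 then f (m, st m) else s0.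
have Ist : forall n, InvS F (st n).
  elim => [//|n IH].
  have [p1 p2 p3 p4 _] := hf (n, st n) IH.
  split => // z t hz [ht|ht].
  - have [a b] := p3 z t (conj hz ht); by apply: IH.2 => //; left.
  - have [a b] := p4 z t (conj hz ht); by apply: IH.2 => //; right.
have Sp : forall n, Spec F d n (st n) (st n.+1) := fun n => hf (n, st n) (Ist n).
have nest1 : forall n m, (n <= m)%N -> forall z t, Sq1 (st m) z t -> Sq1 (st n) z t.
  move=> n; elim => [|m IH]; first by rewrite leqn0 => /eqP ->.
  rewrite leq_eqVlt => /orP[/eqP -> //|]; rewrite ltnS => /IH h z t hs.
  by apply: h; have [_ _ h3 _ _] := Sp m; apply: h3.
have nest2 : forall n m, (n <= m)%N -> forall z t, Sq2 (st m) z t -> Sq2 (st n) z t.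
  move=> n; elim => [|m IH]; first by rewrite leqn0 => /eqP ->.
  rewrite leq_eqVlt => /orP[/eqP -> //|]; rewrite ltnS => /IH h z t hs.
  by apply: h; have [_ _ _ h4 _] := Sp m; apply: h4.
have [x1 hx1] : exists x1 : nat -> R, forall n, Sq1 (st n) (x1 n) (F (x1 n)).
  suff H : forall n, exists x, Sq1 (st n) x (F x) by have [g hg] := choice H; exists g.
  move=> n.
  have [rn hi] := Ist n.
  have zz : forall a : R, `|a - a| < (st n).2.2 by move=> a; rewrite subrr normr0.
  have [x [h1 h2]] := hi _ _ (zz _) (or_introl (zz _)) _ rn.
  by exists x; split.
have [x2 hx2] : exists x2 : nat -> R, forall n, Sq2 (st n) (x2 n) (F (x2 n)).
  suff H : forall n, exists x, Sq2 (st n) x (F x) by have [g hg] := choice H; exists g.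
  move=> n.
  have [rn hi] := Ist n.
  have zz : forall a : R, `|a - a| < (st n).2.2 by move=> a; rewrite subrr normr0.
  have [x [h1 h2]] := hi _ _ (zz _) (or_intror (zz _)) _ rn.
  by exists x; split.
have [l1 Gl1 hl1] := Hcomp (fun n => (x1 n, F (x1 n))) (fun n => erefl)
  (fun e e0 => let: ex_intro N hN := archi e0 in ex_intro _ N.+1 (fun m k hm hk =>
     lt_trans (let: And5 _ _ _ _ (conj hs _) := Sp N in
       hs (x1 m, F (x1 m)) (x1 k, F (x1 k)) erefl erefl
         (nest1 _ _ hm _ _ (hx1 m)) (nest1 _ _ hk _ _ (hx1 k))) hN)).
have [l2 Gl2 hl2] := Hcomp (fun n => (x2 n, F (x2 n))) (fun n => erefl)
  (fun e e0 => let: ex_intro N hN := archi e0 in ex_intro _ N.+1 (fun m k hm hk =>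
     lt_trans (let: And5 _ _ _ _ (conj _ hs) := Sp N in
       hs (x2 m, F (x2 m)) (x2 k, F (x2 k)) erefl erefl
         (nest2 _ _ hm _ _ (hx2 m)) (nest2 _ _ hk _ _ (hx2 k))) hN)).
have cv1 : forall e : R, 0 < e -> exists N, forall n, (N <= n)%N ->
    `|l1.1 - x1 n| < e /\ `|l1.2 - F (x1 n)| < e.
  move=> e e0; have [e' e'0 he'] := T2 _ _ Htop _ Gl1 _ e0.
  have [N hN] := hl1 e' e'0; exists N => n hn.
  apply: (he' (x1 n, F (x1 n))) => //; rewrite Hsym //; exact: hN.
have cv2 : forall e : R, 0 < e -> exists N, forall n, (N <= n)%N ->
    `|l2.1 - x2 n| < e /\ `|l2.2 - F (x2 n)| < e.
  move=> e e0; have [e' e'0 he'] := T2 _ _ Htop _ Gl2 _ e0.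
  have [N hN] := hl2 e' e'0; exists N => n hn.
  apply: (he' (x2 n, F (x2 n))) => //; rewrite Hsym //; exact: hN.
have ea : l1.1 = l2.1.
  apply: eq_small => e e0.
  have e40 : 0 < e / 4 by lra.
  have [N1 h1] := cv1 _ e40; have [N2 h2] := cv2 _ e40; have [M hM] := archi e40.
  set K := maxn (maxn N1 N2) M.
  have [rK _ _ _ _] := Sp K.
  have [_ rK' _ _ _] := Sp K.
  have hMK : (M <= K)%N by rewrite /K; lia.
  have hinv := @inv_mono R _ _ hMK.
  have [a1 _] := h1 K.+1 ltac:(rewrite /K; lia).
  have [a2 _] := h2 K.+1 ltac:(rewrite /K; lia).
  have [b1 _] := hx1 K.+1; have [b2 _] := hx2 K.+1.
  move: a1 a2 b1 b2 => /absltP[p1 p2] /absltP[p3 p4] /absltP[p5 p6] /absltP[p7 p8].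
  have hr1 : (st K.+1).2.2 <= M.+1%:R^-1 by apply: le_trans rK' hinv.
  have hr2 : (st K.+1).2.2 < e / 4 by apply: le_lt_trans hr1 hM.
  clearbody st K.
  move: (st K.+1) p5 p6 p7 p8 hr2 => S p5 p6 p7 p8 hr2.
  apply/absltP; split; lra.
have [N1 h1] := cv1 _ r0; have [N2 h2] := cv2 _ r0.
have [_ a1] := h1 N1 (leqnn _); have [_ a2] := h2 N2 (leqnn _).
have [_ b1] := nest1 0%N N1 (leq0n _) _ _ (hx1 N1).
have [_ b2] := nest2 0%N N2 (leq0n _) _ _ (hx2 N2).
have e12 : l1.2 = l2.2 by rewrite Gl1 Gl2 ea.
move: a1 a2 b1 b2; rewrite /= e12 => /absltP[? ?] /absltP[? ?] /absltP[? ?] /absltP[? ?].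
lra.
Qed.


Definition qf {R : realType} (w : R) (n : nat) : R :=
  if odd n then - ((n./2)%:R * w) else (n./2)%:R * w.

Lemma half_odd (m : nat) : (m.*2.+1)./2 = m.
Proof. by rewrite -[m.*2.+1]/(true + m.*2)%N half_bit_double. Qed.

Lemma coverq {R : realType} (w t : R) : 0 < w ->
  exists n : nat, t <= qf w n /\ qf w n <= t + 2 * w.
Proof.
move=> w0; set x := t / w.
have tx : t = x * w by rewrite /x divfK // gt_eqF.
have [t0|t0] := lerP 0 t.
- have x0 : 0 <= x by rewrite /x divr_ge0 // ltW.
  set T := Num.truncn x.
  have h1 : T%:R <= x by rewrite truncn_le.
  have h2 : x < T.+1%:R := truncnS_gt x.
  have h1' : T%:R * w <= x * w by rewrite ler_pM2r.
  have h2' : x * w < T.+1%:R * w by rewrite ltr_pM2r.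
  move: h2'; rewrite -natr1 mulrDl mul1r => h2'.
  exists (T.+1).*2; rewrite /qf odd_double doubleK -natr1 mulrDl mul1r.
  split; lra.
- have : x * w < 0 * w by rewrite mul0r -tx.
  rewrite ltr_pM2r // => xn.
  have x0 : 0 <= - x by lra.
  set T := Num.truncn (- x).
  have h1 : T%:R <= - x by rewrite truncn_le.
  have h2 : - x < T.+1%:R := truncnS_gt (- x).
  have h1' : T%:R * w <= - x * w by rewrite ler_pM2r.
  have h2' : - x * w < T.+1%:R * w by rewrite ltr_pM2r.
  move: h2'; rewrite -natr1 mulrDl mul1r => h2'.
  move: h1 h2' h1'; rewrite mulNr -tx => h1 h2' h1'.
  exists (T.*2.+1); rewrite /qf half_odd /= odd_double /=.
  split; lra.
Qed.

Definition An {R : realType} (F : R -> R) (w : R) (n : nat) : set R :=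
  [set y | forall u, qf w n <= u <= qf w n + 2 * w -> Cl F y u].

Lemma An_closed {R : realType} (F : R -> R) w n : closed (An F w n).
Proof.
move=> y cy u hu e e0.
have [y' [Ay' hy']] := closureR cy (e / 2) ltac:(lra).
have [x [h1 h2]] := Ay' u hu (e / 2) ltac:(lra).
exists x; split; last by apply: lt_trans h2 _; lra.
move: hy' h1 => /absltP[? ?] /absltP[? ?]; apply/absltP; split; lra.
Qed.


Lemma E_nd {R : realType} (F : R -> R) (hc : connected (graph F))
  (d : R * R -> R * R -> R)
  (Hd0 : forall x y, graph F x -> graph F y -> (d x y = 0 <-> x = y))
  (Hsym : forall x y, graph F x -> graph F y -> d x y = d y x)
  (Htri : forall x y z, graph F x -> graph F y -> graph F z -> d x z <= d x y + d y z)
  (Htop : forall V : set (R * R),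
           ((exists2 U : set (R * R), open U & V = graph F `&` U) <->
           (V `<=` graph F /\ forall x, V x ->
              exists2 e : R, 0 < e & forall y, graph F y -> d x y < e -> V y)))
  (Hcomp : forall u : nat -> (R * R)%type, (forall n, graph F (u n)) ->
           (forall e : R, 0 < e -> exists N : nat, forall m n : nat,
              (N <= m)%N -> (N <= n)%N -> d (u m) (u n) < e) ->
           (exists2 l, graph F l & forall e : R, 0 < e -> exists N : nat,
              forall n : nat, (N <= n)%N -> d (u n) l < e))
  k : nowhere_dense (E F k).
Proof.
rewrite /nowhere_dense -(proj1 (closure_id _) (E_closed F k)).
apply/seteqP; split => // x /interiorR [dl dl0 hdl].
set w : R := k.+1%:R^-1 / 8.
have w0 : 0 < w by rewrite /w divr_gt0 // invr_gt0.
have hw : k.+1%:R^-1 / 2 = 4 * w by rewrite /w; field.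
clearbody w.
have claim : exists n z0 rho, 0 < rho /\ forall y, `|z0 - y| < rho -> An F w n y.
  apply: contrapT => H.
  pose O n := ~` An F w n.
  have oO : forall n, open (O n) /\ dense (O n).
    move=> n; split; first by rewrite /O openC; exact: An_closed.
    move=> W [w' Ww] oW; apply: contrapT => hne.
    have [rho rho0 hr] := openR_ball oW Ww.
    apply: H; exists n, w', rho; split => // y hy.
    apply: contrapT => nA; apply: hne; exists y; split; [exact: hr | exact: nA].
  have := @Baire R R O oO (ball x dl) (ex_intro _ x (ballxx _ dl0)) (ball_open _ _).
  move=> [z [/ballR bz Oz]].
  have Ez := hdl z bz.
  have [t ht] := section_E F hc k z Ez.
  have [n [hn1 hn2]] := coverq w t w0.
  apply: (Oz n I) => u /andP[u1 u2]; apply: ht; apply/andP; split.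
    lra.
  rewrite hw; lra.
have [n [z0 [rho [rho0 hrect]]]] := claim.
have w30 : 0 < w / 3 by lra.
have [r [r0 r1 r2]] := posmin2 rho0 w30.
apply: (no_rect F d Hd0 Hsym Htri Htop Hcomp z0 (qf w n + r) (qf w n + 2 * w - r) r r0).
  lra.
move=> z t hz ht.
have hA : An F w n z.
  apply: hrect; rewrite distrC; apply: lt_le_trans hz r1.
apply: hA; move: ht => [/absltP[? ?]|/absltP[? ?]]; apply/andP; split; lra.
Qed.

Theorem theorem2 (R : realType) (F : R -> R) :
  connected (graph F) ->
  completely_metrizable (R := R) (graph F) ->
  meager [set x : R | ~ {for x, continuous F}].
Proof.
move=> hc [d [H0 [Hd0 [Hsym [Htri [Htop Hcomp]]]]]].
exists (E F); split.
  by move=> k; exact: (E_nd F hc d Hd0 Hsym Htri Htop Hcomp k).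
move=> x /= /notcont_E [k hk]; by exists k.
Qed.
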